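(* Let $X\in\mathbb{R}^{n\times p}$, let $\Sigma$ be an $n\times n$ covariance matrix, let $y\in\mathbb{R}^n$, let $\mathcal{K}\subseteq\mathbb{R}^p$ be convex, and let $f_\eta=\eta^TX^Ty$ for $\eta\in\mathcal{K}$. A point $\eta\in\mathcal{K}$ maximizes $f$ over $\mathcal{K}$ if and only if $$\nabla f_{|T_\eta\mathcal{K}}=0,\quad \tilde f^\eta_\eta\ge\mathcal{V}^-_\eta,\quad \tilde f^\eta_\eta\le\mathcal{V}^+_\eta,\quad \mathcal{V}^0_\eta\le0.$$ The same equivalence holds when $\mathcal{K}$ is only locally convex.
   Context: For $\eta\in\mathcal{K}$, let $N_\eta\mathcal{K}$ be the normal cone, $S_\eta\mathcal{K}$ its polar cone (support cone), and $T_\eta\mathcal{K}$ the largest linear subspace contained in $S_\eta\mathcal{K}$ (tangent space), with $V_\eta$ a matrix whose columns form an orthonormal basis of $T_\eta\mathcal{K}$. $\nabla f_{|T_\eta\mathcal{K}}=V_\eta V_\eta^TX^Ty$. Let $P_\eta=\Sigma XV_\eta(V_\eta^TX^T\Sigma XV_\eta)^\dagger V_\eta^TX^T$ ($\dagger$ = pseudoinverse), $\tilde f^\eta_z=(Xz)^T(I-P_\eta)y$ for $z\in\mathcal{K}$, $\sigma^2_\eta=\eta^TX^T(I-P_\eta)\Sigma(I-P_\eta)^TX\eta$ (assumed positive) and $C(\eta)=X^T(I-P_\eta)\Sigma(I-P_\eta)^TX\eta/\sigma^2_\eta$. Define $\mathcal{V}^-_\eta=\max_{z\in\mathcal{K}:\,z^TC(\eta)<1}\frac{\tilde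 f^\eta_z-z^TC(\eta)\tilde f^\eta_\eta}{1-z^TC(\eta)}$, $\mathcal{V}^+_\eta=\min_{z\in\mathcal{K}:\,z^TC(\eta)>1}\frac{\tilde f^\eta_z-z^TC(\eta)\tilde f^\eta_\eta}{1-z^TC(\eta)}$, and $\mathcal{V}^0_\eta=\max_{z\in\mathcal{K}:\,z^TC(\eta)=1}\big(\tilde f^\eta_z-z^TC(\eta)\tilde f^\eta_\eta\big)$, with max over an empty set equal to $-\infty$ and min over an empty set equal to $+\infty$. ''Locally convex'' means the support cone of $\mathcal{K}$ is locally convex everywhere (essentially positive reach). *)

(* Defs.v *)
From HB Require Import structures.
From mathcomp Require Import all_boot all_order all_algebra.
From mathcomp Require Import boolp classical_sets reals constructive_ereal ereal.
From Stdlib Require Import ClassicalEpsilon.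

Set Implicit Arguments.
Unset Strict Implicit.
Unset Printing Implicit Defensive.

Import Order.TTheory GRing.Theory Num.Theory.
Local Open Scope ring_scope.
Local Open Scope classical_set_scope.

Section Defs.
Variable R : realType.

Definition dotv n (u v : 'cV[R]_n) : R := (u^T *m v) 0 0.

(* Moore-Penrose pseudoinverse: the (unique) matrix satisfying the four Penrose equations *)
Definition is_mp_pinv m n (A : 'M[R]_(m, n)) (B : 'M[R]_(n, m)) : Prop :=
  [/\ A *m B *m A = A, B *m A *m B = B, (A *m B)^T = A *m B & (B *m A)^T = B *m A].

Definition pinv m n (A : 'M[R]_(m, n)) : 'M[R]_(n, m) :=
  epsilon (inhabits (0 : 'M[R]_(n, m))) (is_mp_pinv A).

Definition covariance_matrix n (S : 'M[R]_n) : Prop :=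
  S^T = S /\ forall u : 'cV[R]_n, 0 <= dotv u (S *m u).

Definition convex_set p (K : set 'cV[R]_p) : Prop :=
  forall x z, K x -> K z -> forall t : R, 0 <= t <= 1 -> K (t *: x + (1 - t) *: z).

Definition cube p (x : 'cV[R]_p) (r : R) : set 'cV[R]_p :=
  [set z | forall i, `|(z - x) i 0| < r].

Definition locally_convex p (K : set 'cV[R]_p) : Prop :=
  forall x, K x -> exists2 r : R, 0 < r & convex_set (K `&` cube x r).

(* Bouligand tangent cone of K at eta *)
Definition tangent_cone p (K : set 'cV[R]_p) (eta : 'cV[R]_p) : set 'cV[R]_p :=
  [set u | forall e d : R, 0 < e -> 0 < d ->
     exists t : R, exists z, [/\ 0 < t < d, K z &
       forall i, `|(t^-1 *: (z - eta) - u) i 0| < e]].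

(* normal cone N_eta K (polar of the tangent cone; the usual normal cone for convex K) *)
Definition normal_cone p (K : set 'cV[R]_p) (eta : 'cV[R]_p) : set 'cV[R]_p :=
  [set v | forall u, tangent_cone K eta u -> dotv v u <= 0].

Definition support_cone p (K : set 'cV[R]_p) (eta : 'cV[R]_p) : set 'cV[R]_p :=
  [set u | forall v, normal_cone K eta v -> dotv u v <= 0].

Definition linear_subspace p (L : set 'cV[R]_p) : Prop :=
  L 0 /\ forall (a : R) u v, L u -> L v -> L (a *: u + v).

(* tangent space T_eta K: largest linear subspace contained in S_eta K
   (the union of all linear subspaces contained in S_eta K) *)
Definition tangent_space p (K : set 'cV[R]_p) (eta : 'cV[R]_p) : set 'cV[R]_p :=
  [set u | exists L, [/\ linear_subspace L, L `<=` support_cone K eta & L u]].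

Definition orthonormal_basis_of p k (V : 'M[R]_(p, k)) (T : set 'cV[R]_p) : Prop :=
  V^T *m V = 1%:M /\ forall u, T u <-> exists c : 'cV[R]_k, u = V *m c.

Variables (n p k : nat) (X : 'M[R]_(n, p)) (Sigma : 'M[R]_n) (y : 'cV[R]_n)
  (V : 'M[R]_(p, k)).

Definition f_obj (z : 'cV[R]_p) : R := dotv z (X^T *m y).

Definition P_mat : 'M[R]_n :=
  Sigma *m X *m V *m pinv (V^T *m X^T *m Sigma *m X *m V) *m V^T *m X^T.

Definition ftilde (z : 'cV[R]_p) : R := dotv (X *m z) ((1%:M - P_mat) *m y).

Definition sigma2 (eta : 'cV[R]_p) : R :=
  dotv eta (X^T *m (1%:M - P_mat) *m Sigma *m (1%:M - P_mat)^T *m X *m eta).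

Definition Cvec (eta : 'cV[R]_p) : 'cV[R]_p :=
  (sigma2 eta)^-1 *: (X^T *m (1%:M - P_mat) *m Sigma *m (1%:M - P_mat)^T *m X *m eta).

Definition Vminus (K : set 'cV[R]_p) (eta : 'cV[R]_p) : \bar R :=
  ereal_sup [set x | exists z, [/\ K z, dotv z (Cvec eta) < 1 &
    x = ((ftilde z - dotv z (Cvec eta) * ftilde eta) / (1 - dotv z (Cvec eta)))%:E]].

Definition Vplus (K : set 'cV[R]_p) (eta : 'cV[R]_p) : \bar R :=
  ereal_inf [set x | exists z, [/\ K z, dotv z (Cvec eta) > 1 &
    x = ((ftilde z - dotv z (Cvec eta) * ftilde eta) / (1 - dotv z (Cvec eta)))%:E]].

Definition V0 (K : set 'cV[R]_p) (eta : 'cV[R]_p) : \bar R :=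
  ereal_sup [set x | exists z, [/\ K z, dotv z (Cvec eta) = 1 &
    x = (ftilde z - dotv z (Cvec eta) * ftilde eta)%:E]].

End Defs.

(* Main.v *)
Require Import Defs.
From HB Require Import structures.
From mathcomp Require Import all_boot all_order all_algebra.
From mathcomp Require Import boolp classical_sets reals constructive_ereal ereal.
From mathcomp Require Import lra.
Import Order.TTheory GRing.Theory Num.Theory.
Local Open Scope ring_scope.
Local Open Scope classical_set_scope.

Lemma dotvE (R : realType) n (u v : 'cV[R]_n) : dotv u v = \sum_i u i 0 * v i 0.
Proof. by rewrite /dotv mxE; apply: eq_bigr => i _; rewrite mxE. Qed.

Lemma dotvC (R : realType) n (u v : 'cV[R]_n) : dotv u v = dotv v u.
Proof. by rewrite !dotvE; apply: eq_bigr => i _; rewrite mulrC. Qed.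

Lemma dotvZ (R : realType) n (u v : 'cV[R]_n) a : dotv u (a *: v) = a * dotv u v.
Proof. by rewrite /dotv -scalemxAr mxE. Qed.

Lemma dotvB (R : realType) n (u v w : 'cV[R]_n) : dotv u (v - w) = dotv u v - dotv u w.
Proof. by rewrite !dotvE -sumrB; apply: eq_bigr => i _; rewrite !mxE mulrBr. Qed.

Lemma dotvN (R : realType) n (u v : 'cV[R]_n) : dotv (- u) v = - dotv u v.
Proof. by rewrite !dotvE -sumrN; apply: eq_bigr => i _; rewrite mxE mulNr. Qed.

Lemma max_normal (R : realType) p (K : set 'cV[R]_p) (eta g : 'cV[R]_p) :
  (forall z, K z -> dotv g z <= dotv g eta) ->
  normal_cone K eta g.
Proof.
move=> hmax u hu; rewrite leNgt; apply/negP => hpos.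
set d := dotv g u.
set S := \sum_i `|g i 0|.
have S0 : 0 <= S by apply: sumr_ge0 => i _.
set e := d / (S + 1).
have e0 : 0 < e by apply: divr_gt0 => //; lra.
have Se : S * e < d.
  rewrite /e mulrA ltr_pdivrMr; last lra.
  have : 0 < d * 1 by rewrite mulr1.
  nra.
have [t [z [/andP [t0 _] Kz hz]]] := hu e 1 e0 ltr01.
set w := t^-1 *: (z - eta).
have hw : dotv g w <= 0.
  rewrite /w dotvZ dotvB; apply: mulr_ge0_le0.
  - by rewrite invr_ge0 ltW.
  - by rewrite subr_le0; apply: hmax.
have : d - S * e <= dotv g w.
  have -> : dotv g w = d + dotv g (w - u) by rewrite dotvB /d; lra.
  rewrite lerD2l; rewrite dotvE /S mulr_suml -sumrN; apply: ler_sum => i _.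
  rewrite mulrC -mulNr.
  have : `|g i 0 * (w - u) i 0| <= `|g i 0| * e.
    by rewrite normrM; apply: ler_wpM2l => //; apply: ltW; apply: hz.
  rewrite ler_norml => /andP [h1 _]; by rewrite mulNr mulrC.
lra.
Qed.

Theorem lemma1 (R : realType) (n p k : nat) (X : 'M[R]_(n, p)) (Sigma : 'M[R]_n)
  (y : 'cV[R]_n) (K : set 'cV[R]_p) (eta : 'cV[R]_p) (V : 'M[R]_(p, k)) :
  covariance_matrix Sigma ->
  (convex_set K \/ locally_convex K) ->
  K eta ->
  orthonormal_basis_of V (tangent_space K eta) ->
  0 < sigma2 X Sigma V eta ->
  (forall z, K z -> f_obj X y z <= f_obj X y eta) <->
  [/\ V *m V^T *m X^T *m y = 0,
      (Vminus X Sigma y V K eta <= (ftilde X Sigma y V eta)%:E)%E,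
      ((ftilde X Sigma y V eta)%:E <= Vplus X Sigma y V K eta)%E &
      (V0 X Sigma y V K eta <= 0)%E].
Proof.
move=> _ _ Keta [VV Vsp] _.
set g := X^T *m y.
have eqVV : V *m V^T *m X^T *m y = V *m (V^T *m g) by rewrite /g !mulmxA.
have fE : V^T *m g = 0 -> forall z, ftilde X Sigma y V z = f_obj X y z.
  move=> hg z; rewrite /ftilde /f_obj.
  have Py : P_mat X Sigma V *m y = 0.
    by rewrite /P_mat -!mulmxA (mulmxA V^T) -/g hg !mulmx0.
  rewrite mulmxBl mul1mx Py subr0 /dotv trmx_mul -mulmxA.
  done.
set c := fun z => dotv z (Cvec X Sigma V eta).
have key : V^T *m g = 0 ->
  ((forall z, K z -> f_obj X y z <= f_obj X y eta) <->
  [/\ (Vminus X Sigma y V K eta <= (ftilde X Sigma y V eta)%:E)%E,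
      ((ftilde X Sigma y V eta)%:E <= Vplus X Sigma y V K eta)%E &
      (V0 X Sigma y V K eta <= 0)%E]).
  move=> hg; rewrite !fE //; split.
  - move=> hmax; split.
    + apply: ge_ereal_sup => _ [z [Kz hc ->]]; rewrite lee_fin !fE //.
      rewrite ler_pdivrMr; last lra.
      have := hmax z Kz; nra.
    + apply: le_ereal_inf_tmp => _ [z [Kz hc ->]]; rewrite lee_fin !fE //.
      rewrite ler_ndivlMr; last lra.
      have := hmax z Kz; nra.
    + apply: ge_ereal_sup => _ [z [Kz hc ->]]; rewrite lee_fin !fE // hc.
      have := hmax z Kz; lra.
  - move=> [h1 h2 h3] z Kz.
    set cz := dotv z (Cvec X Sigma V eta).
    have := ltgtP cz 1; case => hc.
    + have : (((ftilde X Sigma y V z - cz * ftilde X Sigma y V eta) / (1 - cz))%:E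
          <= (f_obj X y eta)%:E)%E.
        by apply: le_trans h1; apply: ereal_sup_ubound; exists z.
      rewrite lee_fin !fE // ler_pdivrMr; last lra.
      nra.
    + have : ((f_obj X y eta)%:E <=
         ((ftilde X Sigma y V z - cz * ftilde X Sigma y V eta) / (1 - cz))%:E)%E.
        by apply: le_trans h2 _; apply: ereal_inf_lbound; exists z.
      rewrite lee_fin !fE // ler_ndivlMr; last lra.
      nra.
    + have : ((ftilde X Sigma y V z - cz * ftilde X Sigma y V eta)%:E <= 0)%E.
        by apply: le_trans h3; apply: ereal_sup_ubound; exists z.
      rewrite lee_fin !fE // hc; lra.
rewrite eqVV; split.
- move=> hmax.
  have hN : normal_cone K eta g.
    by apply: max_normal => z Kz; rewrite !(@dotvC R p g); apply: hmax.
  have hg : V^T *m g = 0.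
    apply/matrixP => i j; rewrite ord1 !mxE.
    have hT : tangent_space K eta (col i V) by apply/Vsp; exists (delta_mx i 0); rewrite colE.
    have [L [[L0 Llin] LS Lu]] := hT.
    have Lm : L (- col i V).
      by have := Llin (-1) _ _ Lu L0; rewrite addr0 scaleN1r.
    have h1 := LS _ Lu g hN.
    have h2 := LS _ Lm g hN.
    rewrite dotvN in h2.
    have -> : \sum_j0 V^T i j0 * g j0 0 = dotv (col i V) g.
      by rewrite dotvE; apply: eq_bigr => l _; rewrite !mxE.
    lra.
  have [A _] := key hg; have [a b c'] := A hmax.
  by split => //; rewrite hg mulmx0.
- move=> [h1 h2 h3 h4].
  have hg : V^T *m g = 0.
    by rewrite -[V^T *m g]mul1mx -VV -mulmxA h1 mulmx0.
  by have [_ B] := key hg; apply: B.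
Qed.
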